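(* Let $d\ge 2$ and $N\ge 2$ be integers, let $X=\{x^1,\dots,x^N\}\subseteq\mathbb{R}^d$, and let $C\subseteq\mathbb{R}^d$ be a proper closed convex cone which is pointed (i.e. $C\cap(-C)=\{0\}$) and polyhedral (i.e. an intersection of finitely many closed halfspaces). If $\bar x\in X$ satisfies $r_{X,C}(\bar x)=\max_{x\in X} r_{X,C}(x)$, then $\bar x$ is maximal in $X$ with respect to $\leq_C$. The converse is not true in general: there exist such $X$ and $C$ and an element of $X$ that is maximal in $X$ with respect to $\leq_C$ but does not maximize $r_{X,C}$ over $X$.
   Context: A proper closed convex cone $C\subseteq\mathbb{R}^d$ is a closed set with $sC=C$ for all $s\ge 0$, $C+C=C$, and $C\notin\{\varnothing,\mathbb{R}^d\}$; it induces the preorder $y\leq_C z$ iff $z-y\in C$. The dual cone is $C^+=\{v\in\mathbb{R}^d\mid \forall z\in C: v^\top z\ge 0\}$, and for $w\in\mathbb{R}^d$, $H^+(w)=\{z\in\mathbb{R}^d\mid w^\top z\ge 0\}$. The cone ranking function is $r_{X,C}(z)=\min_{w\in C^+}\#\{x\in X\mid w^\top x\le w^\top z\}$ for $z\in\mathbb{R}^d$ ($\#$ = cardinality). A point $\bar x\in X$ is maximal in $X$ with respect to $\leq_C$ if for every $x\in X$ with $\bar x\leq_C x$ one has $x\leq_C\bar x$. *)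

(* Defs.v *)
From HB Require Import structures.
From mathcomp Require Import all_boot all_order all_algebra.
From mathcomp Require Import all_classical all_reals all_analysis.
Set Implicit Arguments. Unset Strict Implicit. Unset Printing Implicit Defensive.
Import Order.TTheory GRing.Theory Num.Theory numFieldNormedType.Exports.
Local Open Scope classical_set_scope.
Local Open Scope ring_scope.

Section Defs.
Variables (R : realType) (d : nat).

Definition dotv (w z : 'rV[R]_d) : R := \sum_(i < d) w 0 i * z 0 i.

Definition proper_closed_convex_cone (C : set 'rV[R]_d) : Prop :=
  [/\ closed C,
      (forall s z, 0 <= s -> C z -> C (s *: z)),
      (forall y z, C y -> C z -> C (y + z)),
      C !=set0 & C <> setT].

Definition pointed_cone (C : set 'rV[R]_d) : Prop :=
  forall z, C z -> C (- z) -> z = 0.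

Definition polyhedral (C : set 'rV[R]_d) : Prop :=
  exists (k : nat) (a : 'I_k -> 'rV[R]_d) (b : 'I_k -> R),
    C = [set z | forall j, dotv (a j) z <= b j].

Definition cone_le (C : set 'rV[R]_d) (y z : 'rV[R]_d) : Prop := C (z - y).

Definition dual_cone (C : set 'rV[R]_d) : set 'rV[R]_d :=
  [set v | forall z, C z -> 0 <= dotv v z].

(* #{x in X | w^T x <= w^T z}, X = {x i | i < N} with x injective *)
Definition count_below (N : nat) (x : 'I_N -> 'rV[R]_d) (w z : 'rV[R]_d) : nat :=
  #|[set i : 'I_N | dotv w (x i) <= dotv w z]|.

Definition rank_pred (C : set 'rV[R]_d) (N : nat) (x : 'I_N -> 'rV[R]_d)
  (z : 'rV[R]_d) : pred nat :=
  fun n => `[< exists w, dual_cone C w /\ count_below x w z = n >].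

Lemma rank_pred_ex C N (x : 'I_N -> 'rV[R]_d) z : exists n, rank_pred C x z n.
Proof.
exists (count_below x 0 z); apply/asboolP; exists 0; split => //.
by move=> y _; rewrite /dotv big1 // => i _; rewrite mxE mul0r.
Qed.

(* r_{X,C}(z) = min_{w in C^+} #{x in X | w^T x <= w^T z} *)
Definition cone_rank C N (x : 'I_N -> 'rV[R]_d) (z : 'rV[R]_d) : nat :=
  ex_minn (rank_pred_ex C x z).

Definition maximal_in C N (x : 'I_N -> 'rV[R]_d) (xbar : 'rV[R]_d) : Prop :=
  forall i, cone_le C xbar (x i) -> cone_le C (x i) xbar.

End Defs.

(* Main.v *)
Require Import Defs.
From HB Require Import structures.
From mathcomp Require Import all_boot all_order all_algebra.
From mathcomp Require Import all_classical all_reals all_analysis.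
From mathcomp Require Import lra.
Import Order.TTheory GRing.Theory Num.Theory numFieldNormedType.Exports.
Local Open Scope classical_set_scope.
Local Open Scope ring_scope.

Section Aux.
Variables (R : realType) (d : nat).
Implicit Types (a b w v y z : 'rV[R]_d).

Lemma dotvDl a b z : dotv (a + b) z = dotv a z + dotv b z.
Proof. by rewrite /dotv -big_split; apply: eq_bigr => i _; rewrite !mxE mulrDl. Qed.
Lemma dotvZl t a z : dotv (t *: a) z = t * dotv a z.
Proof. by rewrite /dotv mulr_sumr; apply: eq_bigr => i _; rewrite !mxE mulrA. Qed.
Lemma dotvNl a z : dotv (- a) z = - dotv a z.
Proof. by rewrite /dotv -sumrN; apply: eq_bigr => i _; rewrite !mxE mulNr. Qed.
Lemma dotvBr w y z : dotv w (y - z) = dotv w y - dotv w z.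
Proof. by rewrite /dotv -sumrB; apply: eq_bigr => i _; rewrite !mxE mulrBr. Qed.
Lemma dotvZr w t z : dotv w (t *: z) = t * dotv w z.
Proof. by rewrite /dotv mulr_sumr; apply: eq_bigr => i _; rewrite !mxE mulrCA. Qed.
Lemma dotv0r w : dotv w 0 = 0.
Proof. by rewrite /dotv big1 // => i _; rewrite mxE mulr0. Qed.
Lemma dotvNr w z : dotv w (- z) = - dotv w z.
Proof. by rewrite -sub0r dotvBr dotv0r sub0r. Qed.

Lemma rank_le C N (x : 'I_N -> 'rV[R]_d) z w :
  dual_cone C w -> (cone_rank C x z <= count_below x w z)%N.
Proof.
move=> Hw; rewrite /cone_rank; case: ex_minnP => m _ Hm; apply: Hm.
by apply/asboolP; exists w.
Qed.

Lemma rank_wit C N (x : 'I_N -> 'rV[R]_d) z :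
  exists w, dual_cone C w /\ count_below x w z = cone_rank C x z.
Proof.
rewrite /cone_rank; case: ex_minnP => m Pm _.
by move: Pm => /asboolP.
Qed.

Lemma sep C c : proper_closed_convex_cone C -> polyhedral C -> ~ C (- c) ->
  exists v, dual_cone C v /\ 0 < dotv v c.
Proof.
case=> _ Hs _ [z0 Cz0] _ [k [a [b HC]]] Hn.
have C0 : C 0 by have := Hs 0 z0 (lexx 0) Cz0; rewrite scale0r.
have : ~ (forall j, dotv (a j) (- c) <= b j) by move=> H; apply: Hn; rewrite HC.
move=> /existsNP [j /negP]; rewrite -ltNge => Hj.
have b0 : 0 <= b j by move: C0; rewrite HC => /(_ j); rewrite dotv0r.
exists (- a j); split; last by rewrite dotvNl -dotvNr; exact: le_lt_trans b0 Hj.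
move=> z Cz; rewrite dotvNl oppr_ge0; rewrite leNgt; apply/negP => Hz.
have Hs' := Hs ((b j + 1) / dotv (a j) z) z _ Cz.
have : C (((b j + 1) / dotv (a j) z) *: z).
  apply: Hs' ; apply: divr_ge0; [lra | exact: ltW].
rewrite HC => /(_ j); rewrite dotvZr mulfVK ?gt_eqF //; lra.
Qed.

End Aux.

Lemma part1 (R : realType) (d N : nat) (x : 'I_N -> 'rV[R]_d) (C : set 'rV[R]_d) (ibar : 'I_N) :
    proper_closed_convex_cone C -> polyhedral C ->
    (forall i, (cone_rank C x (x i) <= cone_rank C x (x ibar))%N) ->
    maximal_in C x (x ibar).
Proof.
move=> HC Hp Hmax i Hle; apply: contrapT => Hn.
have Cc : C (x i - x ibar) by exact: Hle.
have [v [Hv vc]] : exists v, dual_cone C v /\ 0 < dotv v (x i - x ibar).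
  by apply: sep => //; rewrite opprB.
have [w [Hw Hcw]] := @rank_wit _ _ C _ x (x i).
pose g k := dotv w (x k) - dotv w (x i).
pose h k := dotv v (x k) - dotv v (x i).
pose S := \sum_(k | 0 < g k) `|h k| / g k.
have S0 : 0 <= S by apply: sumr_ge0 => k gk; apply: divr_ge0 => //; exact: ltW.
pose t := S + 1.
pose w' := t *: w + v.
have dw' : dual_cone C w'.
  move=> z Cz; rewrite /w' dotvDl dotvZl.
  have := Hw z Cz; have := Hv z Cz; rewrite /t => ? ?.
  apply: addr_ge0 => //; apply: mulr_ge0 => //; lra.
have E k : dotv w' (x k) - dotv w' (x i) = t * g k + h k.
  rewrite /w' !dotvDl !dotvZl /g /h; lra.
have sub1 : [set k | dotv w' (x k) <= dotv w' (x i)] \subset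
            [set k | dotv w (x k) <= dotv w (x i)].
  apply/fintype.subsetP => k; rewrite !in_setE /=; apply: contraTT; rewrite -!ltNge => Hk.
  have gk : 0 < g k by rewrite /g subr_gt0.
  have : `|h k| / g k <= S.
    rewrite /S (bigD1 k) //=; rewrite lerDl; apply: sumr_ge0 => l /andP[gl _].
    by apply: divr_ge0 => //; exact: ltW.
  rewrite ler_pdivrMr // => Hh.
  rewrite -subr_gt0 E /t mulrDl mul1r.
  have H2 := ler_norm (- h k).
  rewrite normrN in H2.
  lra.
have wc : 0 < dotv w' (x i) - dotv w' (x ibar).
  rewrite -dotvBr /w' dotvDl dotvZl.
  have := Hw _ Cc => ?; apply: ltr_wpDl => //; apply: mulr_ge0 => //; rewrite /t; lra.
have pr : [set k | dotv w' (x k) <= dotv w' (x ibar)] \proper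
            [set k | dotv w' (x k) <= dotv w' (x i)].
  apply/properP; split.
    apply/fintype.subsetP => k; rewrite !in_setE /= => Hk; apply: le_trans Hk _.
    rewrite -subr_ge0; exact: ltW.
  exists i; rewrite !unfold_in /=; first by apply/asboolP.
  by apply/negP => /asboolP; rewrite leNgt -subr_gt0 wc.
have c1 := proper_card pr; have c2 := subset_leq_card sub1.
have c3 := @rank_le _ _ C _ x (x ibar) _ dw'; have c4 := Hmax i.
rewrite -Hcw in c4; rewrite /count_below in c3 c4.
have c5 : (count_below x w' (x ibar) < count_below x w (x i))%N.
  exact: (leq_trans c1 c2).
rewrite /count_below in c5.
have := leq_trans (leq_ltn_trans c3 c5) c4.
by rewrite ltnn.
Qed.

Section Ex.
Variable R : realType.

Lemma dotv_delta (j : 'I_2) (z : 'rV[R]_2) : dotv (delta_mx 0 j) z = z 0 j.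
Proof.
rewrite /dotv (bigD1 j) //= big1 ?addr0; first by rewrite mxE !eqxx mul1r.
by move=> i /negPf ij; rewrite mxE ij andbF mul0r.
Qed.

Definition Cex : set 'rV[R]_2 :=
  [set z | forall j : 'I_2, dotv (- delta_mx 0 j) z <= 0].

Lemma CexP z : Cex z <-> forall j, 0 <= z 0 j.
Proof.
rewrite /Cex /=; split => H j; have := H j; by rewrite dotvNl dotv_delta oppr_le0.
Qed.

Definition xex (k : 'I_3) : 'rV[R]_2 :=
  \row_(j < 2) (if (k:nat) == 0%N then 0 else if (k:nat) == 1%N
     then (if (j:nat) == 0%N then 1 else 0) else (if (j:nat)==0%N then 2 else -1)).

Lemma Cex_proper : proper_closed_convex_cone Cex.
Proof.
split.
- have -> : Cex = \bigcap_(j in setT) ((fun z : 'rV[R]_2 => z 0 j) @^-1` [set r | 0 <= r]).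
    apply/seteqP; split => z /=.
      by move/CexP => H j _; exact: H.
    by move=> H; apply/CexP => j; exact: H.
  apply: closed_bigI => j _; apply: preimage_closed; last exact: closed_ge.
  by move=> z _; exact: coord_continuous.
- move=> s z s0 /CexP Hz; apply/CexP => j; rewrite mxE; exact: mulr_ge0.
- move=> y z /CexP Hy /CexP Hz; apply/CexP => j; rewrite mxE; exact: addr_ge0.
- by exists 0; apply/CexP => j; rewrite mxE.
- move=> H; have : Cex (const_mx (-1)) by rewrite H.
  by move/CexP/(_ 0); rewrite mxE; lra.
Qed.

Lemma Cex_pointed : pointed_cone Cex.
Proof.
move=> z /CexP H1 /CexP H2; apply/matrixP => i j; rewrite (ord1 i) mxE.
by have := H1 j; have := H2 j; rewrite mxE; lra.
Qed.

Lemma Cex_poly : polyhedral Cex.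
Proof. by exists 2%N, (fun j => - delta_mx 0 j), (fun _ => 0). Qed.

Lemma xex_inj : injective xex.
Proof.
move=> [[|[|[|?]]] Hi] [[|[|[|?]]] Hj] //= E; try by apply: val_inj.
all: have := congr1 (fun m : 'M[R]_(1,2) => m 0 0) E; rewrite !mxE /= => H; exfalso; clear E; lra.
Qed.

Let ib : 'I_3 := @Ordinal 3 2 isT.
Let i1 : 'I_3 := @Ordinal 3 1 isT.
Let i0 : 'I_3 := @Ordinal 3 0 isT.

Lemma xex_max : maximal_in Cex xex (xex ib).
Proof.
move=> [[|[|[|?]]] Hi] //= /CexP /(_ 0); rewrite !mxE /=; try lra.
Qed.

Lemma rank_ib : (cone_rank Cex xex (xex ib) <= 1)%N.
Proof.
have dw : dual_cone Cex (delta_mx 0 1).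
  by move=> z /CexP Hz; rewrite dotv_delta.
apply: leq_trans (@rank_le _ _ Cex _ xex (xex ib) _ dw) _.
rewrite /count_below.
apply: leq_trans (@subset_leq_card _ _ (pred1 ib) _) _; last by rewrite card1.
apply/fintype.subsetP => k; rewrite unfold_in /= => /asboolP.
rewrite !dotv_delta !mxE /=.
case: k => [[|[|[|?]]] Hk] //= H; try (exfalso; lra).
Qed.

Lemma rank_i1 : (2 <= cone_rank Cex xex (xex i1))%N.
Proof.
have [w [Hw <-]] := @rank_wit _ _ Cex _ xex (xex i1).
have Hq : Cex (xex i1 - xex i0).
  apply/CexP => j; rewrite !mxE /=; case: ifP => _; lra.
have le : dotv w (xex i0) <= dotv w (xex i1).
  by rewrite -subr_ge0 -dotvBr; apply: Hw.
apply: leq_trans (@subset_leq_card _ (mem [set i0; i1]%SET) _ _).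
  by rewrite cards2.
by apply/fintype.subsetP => k; rewrite !inE => /orP [] /eqP -> /=.
Qed.

End Ex.

Theorem theorem2p3 (R : realType) :
  (forall (d N : nat) (x : 'I_N -> 'rV[R]_d) (C : set 'rV[R]_d) (ibar : 'I_N),
    (2 <= d)%N -> (2 <= N)%N -> injective x ->
    proper_closed_convex_cone C -> pointed_cone C -> polyhedral C ->
    (forall i, (cone_rank C x (x i) <= cone_rank C x (x ibar))%N) ->
    maximal_in C x (x ibar))
  /\
  (exists (d N : nat) (x : 'I_N -> 'rV[R]_d) (C : set 'rV[R]_d) (ibar : 'I_N),
    [/\ (2 <= d)%N, (2 <= N)%N & injective x] /\
    [/\ proper_closed_convex_cone C, pointed_cone C & polyhedral C] /\
    maximal_in C x (x ibar) /\
    exists i, (cone_rank C x (x ibar) < cone_rank C x (x i))%N).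
Proof.
split.
  move=> d N x C ibar _ _ _ HC _ Hp Hm; exact: part1 HC Hp Hm.
exists 2%N, 3%N, (@xex R), (@Cex R), (@Ordinal 3 2 isT).
split; first by split => //; exact: xex_inj.
split; first by split; [exact: Cex_proper | exact: Cex_pointed | exact: Cex_poly].
split; first exact: xex_max.
exists (@Ordinal 3 1 isT).
exact: leq_ltn_trans (rank_ib R) (rank_i1 R).
Qed.
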